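(* Let $\mathcal V\subseteq B(H)$ be a concrete operator system (a unital self-adjoint subspace) and suppose $p\in\mathcal V$ is a projection in $B(H)$. Then the abstract compression $(\mathcal V/J_p,\{\widetilde C(p_n)\}_n,p+J_p)$ is completely order isomorphic to the concrete compression operator system $p\mathcal V p\subseteq B(pH)$ (with unit $p$).
   Context: Here $\mathcal V$ carries the matrix order inherited from $B(H)$ with unit $I$; $p_n=I_n\otimes p$. Define $C(p_n)=\{x\in M_n(\mathcal V): x=x^*,\ \forall\epsilon>0\ \exists t>0 \text{ with } x+\epsilon p_n+t(I_n\otimes I-p_n)\ge 0 \text{ in } B(H^n)\}$, $J_p=\operatorname{span}(C(p)\cap -C(p))$, and $\widetilde C(p_n)=\{(x_{ij}+J_p)\in M_n(\mathcal V/J_p):(x_{ij})\in C(p_n)\}$. *)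

(* Defs.v *)
From HB Require Import structures.
From mathcomp Require Import all_boot all_order all_algebra.
From mathcomp Require Import complex reals.
Set Implicit Arguments.
Unset Strict Implicit.
Unset Printing Implicit Defensive.
Import Order.TTheory GRing.Theory Num.Theory.
Local Open Scope ring_scope.
Local Open Scope complex_scope.

Section OperatorSystems.
Variable R : realType.
Local Notation C := (R[i]).
Variable H : lmodType C.
(* inner product, linear in the first argument *)
Variable ip : H -> H -> C.

Definition is_inner_product : Prop :=
  [/\ (forall (a : C) (x y z : H), ip (a *: x + y) z = a * ip x z + ip y z),
      (forall x y : H, ip y x = Num.conj (ip x y)),
      (forall x : H, 0 <= ip x x) &
      (forall x : H, ip x x = 0 -> x = 0)].

(* completeness for the norm ||x|| = sqrt (ip x x) *)
Definition ip_complete : Prop :=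
  forall u : nat -> H,
    (forall e : R, 0 < e -> exists N : nat, forall m n : nat,
        (N <= m)%N -> (N <= n)%N -> ip (u m - u n) (u m - u n) < e%:C) ->
    exists l : H, forall e : R, 0 < e -> exists N : nat, forall n : nat,
        (N <= n)%N -> ip (u n - l) (u n - l) < e%:C.

Definition is_hilbert : Prop := is_inner_product /\ ip_complete.

Definition lin_op (T : H -> H) : Prop :=
  forall (a : C) (x y : H), T (a *: x + y) = a *: T x + T y.

Definition bounded_op (T : H -> H) : Prop :=
  lin_op T /\ exists M : R, forall x : H, ip (T x) (T x) <= M%:C * ip x x.

Definition adjoint_of (x y : H -> H) : Prop :=
  forall u v : H, ip (x u) v = ip u (y v).

Definition projection (p : H -> H) : Prop :=
  [/\ bounded_op p, (forall u, p (p u) = p u) & adjoint_of p p].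

Definition operator_system (V : (H -> H) -> Prop) : Prop :=
  [/\ (forall x, V x -> bounded_op x),
      V (fun u => u),
      V (fun _ => 0),
      (forall (a : C) x y, V x -> V y -> V (fun u => a *: x u + y u)) &
      (forall x, V x -> exists2 y, V y & adjoint_of x y)].

(* matrices over operators act on H^n = 'I_n -> H *)
Definition mx_apply n (X : 'M[H -> H]_n) (xi : 'I_n -> H) (i : 'I_n) : H :=
  \sum_(j < n) X i j (xi j).

Definition mx_in n (S : (H -> H) -> Prop) (X : 'M[H -> H]_n) : Prop :=
  forall i j, S (X i j).

Definition mx_sa n (X : 'M[H -> H]_n) : Prop :=
  forall xi eta : 'I_n -> H,
    \sum_(i < n) ip (mx_apply X xi i) (eta i) = \sum_(i < n) ip (xi i) (mx_apply X eta i).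

Definition mx_pos n (X : 'M[H -> H]_n) : Prop :=
  forall xi : 'I_n -> H, 0 <= \sum_(i < n) ip (mx_apply X xi i) (xi i).

(* X + e p_n + t (I_n (x) I - p_n) *)
Definition mx_shift (p : H -> H) n (e t : R) (X : 'M[H -> H]_n) : 'M[H -> H]_n :=
  \matrix_(i, j) (fun u => X i j u +
     (if i == j then e%:C *: p u + t%:C *: (u - p u) else 0)).

Definition Cpn (V : (H -> H) -> Prop) (p : H -> H) n (X : 'M[H -> H]_n) : Prop :=
  [/\ mx_in V X, mx_sa X &
      forall e : R, 0 < e -> exists2 t : R, 0 < t & mx_pos (mx_shift p e t X)].

Definition Cp (V : (H -> H) -> Prop) (p : H -> H) (x : H -> H) : Prop :=
  Cpn V p (\matrix_(i < 1, j < 1) x).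

(* J_p = span (C(p) ∩ -C(p)), finite complex linear combinations *)
Definition Jp (V : (H -> H) -> Prop) (p : H -> H) (x : H -> H) : Prop :=
  exists (k : nat) (c : 'I_k -> C) (s : 'I_k -> (H -> H)),
    (forall l, Cp V p (s l) /\ Cp V p (fun u => - s l u)) /\
    (forall u, x u = \sum_(l < k) c l *: s l u).

(* the class (X_ij + J_p) lies in C~(p_n): some representative lies in C(p_n) *)
Definition Ctilde (V : (H -> H) -> Prop) (p : H -> H) n (X : 'M[H -> H]_n) : Prop :=
  exists2 Y : 'M[H -> H]_n, Cpn V p Y & forall i j, Jp V p (fun u => Y i j u - X i j u).

(* elements of pVp, viewed as operators on H vanishing off pH *)
Definition compr (V : (H -> H) -> Prop) (p : H -> H) (y : H -> H) : Prop :=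
  exists2 x, V x & forall u, y u = p (x (p u)).

Definition mx_pos_pH (p : H -> H) n (Y : 'M[H -> H]_n) : Prop :=
  forall xi : 'I_n -> H, (forall i, p (xi i) = xi i) ->
    0 <= \sum_(i < n) ip (mx_apply Y xi i) (xi i).

(* psi : V -> pVp induces (via the quotient map V -> V/J_p) a unital complete
   order isomorphism (V/J_p, {C~(p_n)}, p + J_p) -> pVp ⊆ B(pH):
   psi is linear, maps V onto pVp, has kernel exactly J_p, sends p to the unit p
   of B(pH), and [x_ij + J_p] ∈ C~(p_n) iff [psi x_ij] >= 0 in B((pH)^n). *)
Definition compression_coi (V : (H -> H) -> Prop) (p : H -> H) (psi : (H -> H) -> (H -> H)) : Prop :=
  [/\ (forall (a : C) x y, V x -> V y -> forall u,
          psi (fun v => a *: x v + y v) u = a *: psi x u + psi y u),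
      (forall x, V x -> compr V p (psi x)),
      (forall y, compr V p y -> exists2 x, V x & forall u, psi x u = y u),
      (forall x, V x -> ((forall u, psi x u = 0) <-> Jp V p x)) &
      (forall u, psi p u = p u)] /\
  (
      (forall n (X : 'M[H -> H]_n), mx_in V X ->
          (Ctilde V p X <-> mx_pos_pH p (\matrix_(i, j) psi (X i j))))).

End OperatorSystems.

(* Main.v *)
Require Import Defs.
From HB Require Import structures.
From mathcomp Require Import all_boot all_order all_algebra.
From mathcomp Require Import complex reals.
From mathcomp Require Import ring lra.
From Stdlib Require Import FunctionalExtensionality IndefiniteDescription.
Set Implicit Arguments.
Unset Strict Implicit.
Unset Printing Implicit Defensive.
Import Order.TTheory GRing.Theory Num.Theory.
Local Open Scope ring_scope.
Local Open Scope complex_scope.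
Local Notation cRe := (@complex.Re _).
Local Notation cIm := (@complex.Im _).

Section Pure.
Variable R : realType.
Local Notation C := (R[i]).

Lemma conjE (x : C) : Num.conj x = conjc x.
Proof.
rewrite {1}[x]Crect rmorphD rmorphM /=.
rewrite (conj_Creal (Creal_Re x)) (conj_Creal (Creal_Im x)).
rewrite (@conjCi (R[i])).
rewrite -complexRe -complexIm -complexiE.
by case: x => a b /=; apply/eqP; rewrite eq_complex /=; simpc.
Qed.

Lemma geC (x : C) : (0 <= x) = (cIm x == 0) && (0 <= cRe x).
Proof. by case: x => a b; rewrite lecE /= eq_sym. Qed.

Lemma final_ineq (e K : R) (A B D N1 N2 W : C) :
 0 < e -> 0 <= K -> 0 <= A -> 0 <= N1 -> 0 <= N2 -> 0 <= W -> Num.conj D = D ->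
 0 <= e%:C * e%:C * N1 + e%:C * Num.conj B + e%:C * B + W ->
 0 <= N2 + Num.conj D + D + W ->
 cRe W <= K * cRe N2 ->
 0 <= A + Num.conj B + B + D + e%:C * N1 + (K / e + K / 2%:R + 1)%:C * N2.
Proof.
rewrite !conjE.
case: A => a1 a2; case: B => b1 b2; case: D => d1 d2; case: N1 => n1 m1;
case: N2 => n2 m2; case: W => w1 w2 /=.
rewrite !geC /= => e0 K0 /andP[/eqP-> a0] /andP[/eqP-> n10] /andP[/eqP-> n20]
  /andP[/eqP-> w0] [dd].
have -> : d2 = 0 by lra.
move=> /andP[_ h1] /andP[_ h2] h3; apply/andP; split.
  by apply/eqP; ring.
have ue : K / e * e = K by rewrite mulfVK // gt_eqF.
set u := K / e in ue *.
have h1' : 0 <= e * (e * n1 + b1 + b1) + w1 by nra.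
have hw : w1 <= u * e * n2 by rewrite ue.
have key : 0 <= e * (a1 + b1 + b1 + d1 + e * n1 + (u + K / 2 + 1) * n2).
  nra.
rewrite pmulr_rge0 // in key.
by move: key; congr (_ <= _); ring.
Qed.
Lemma ge0_eps (A N : C) : 0 <= N -> (forall e : R, 0 < e -> 0 <= A + e%:C * N) -> 0 <= A.
Proof.
move: A N; case=> a b [n m] hN h.
have h1 := h 1 ltr01.
move: hN h1; rewrite !geC /= => /andP[/eqP-> n0].
rewrite !mul0r !mulr0 !addr0 subr0 => /andP[/eqP hb _].
rewrite hb eqxx /=.
rewrite leNgt; apply/negP => an.
have e0 : 0 < - a / (n + 1) by apply: divr_gt0; lra.
have := h _ e0; rewrite geC /= => /andP[_].
rewrite mul0r subr0.
have -> : - a / (n + 1) * n = - a * (n / (n + 1)) by rewrite mulrA mulrAC.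
have hn1 : n / (n + 1) < 1 by rewrite ltr_pdivrMr; lra.
nra.
Qed.

Lemma herm_pure (P Q a b : C) : 0 <= P -> 0 <= Q -> 0 <= P + a + b + Q ->
  0 <= P + Num.conj 'i%R * a + 'i%R * b + 'i%R * Num.conj 'i%R * Q -> b = Num.conj a.
Proof.
rewrite -complexiE !conjE.
case: P => p1 p2; case: Q => q1 q2; case: a => a1 a2; case: b => b1 b2.
rewrite !geC /= => /andP[/eqP-> _] /andP[/eqP-> _] /andP[/eqP h1 _] /andP[/eqP h2 _].
apply/eqP; rewrite eq_complex /=; apply/andP; split; apply/eqP; lra.
Qed.

Lemma conj_half : Num.conj (2%:R^-1 : C) = 2%:R^-1.
Proof. by rewrite fmorphV rmorph_nat. Qed.

End Pure.

Section Hil.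
Variables (R : realType) (H : lmodType R[i]) (ip : H -> H -> R[i]).
Local Notation C := (R[i]).
Hypothesis ipl : forall (a : C) x y z, ip (a *: x + y) z = a * ip x z + ip y z.
Hypothesis ipc : forall x y, ip y x = Num.conj (ip x y).
Hypothesis ipp : forall x, 0 <= ip x x.
Hypothesis ipd : forall x, ip x x = 0 -> x = 0.

Lemma ip0l z : ip 0 z = 0.
Proof.
have := ipl 1 0 0 z; rewrite scaler0 addr0 mul1r.
by move/(congr1 (fun w => w - ip 0 z)); rewrite subrr addrK.
Qed.
Lemma ipDl x y z : ip (x + y) z = ip x z + ip y z.
Proof. by have := ipl 1 x y z; rewrite scale1r mul1r. Qed.
Lemma ipZl a x z : ip (a *: x) z = a * ip x z.
Proof. by have := ipl a x 0 z; rewrite addr0 ip0l addr0. Qed.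
Lemma ipNl x z : ip (- x) z = - ip x z.
Proof. by rewrite -scaleN1r ipZl mulN1r. Qed.
Lemma ipBl x y z : ip (x - y) z = ip x z - ip y z.
Proof. by rewrite ipDl ipNl. Qed.
Lemma ip_suml (I : Type) (r : seq I) (P : pred I) (F : I -> H) z :
  ip (\sum_(i <- r | P i) F i) z = \sum_(i <- r | P i) ip (F i) z.
Proof. exact: (big_morph (ip^~ z) (fun x y => ipDl x y z) (ip0l z)). Qed.
Lemma ip0r z : ip z 0 = 0.
Proof. by rewrite ipc ip0l rmorph0. Qed.
Lemma ipDr x y z : ip z (x + y) = ip z x + ip z y.
Proof. by rewrite (ipc x z) (ipc y z) (ipc (x + y) z) ipDl rmorphD. Qed.
Lemma ipZr a x z : ip z (a *: x) = Num.conj a * ip z x.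
Proof. by rewrite (ipc x z) (ipc (a *: x) z) ipZl rmorphM. Qed.
Lemma ipNr x z : ip z (- x) = - ip z x.
Proof. by rewrite -scaleN1r ipZr rmorphN rmorph1 mulN1r. Qed.
Lemma ipBr x y z : ip z (x - y) = ip z x - ip z y.
Proof. by rewrite ipDr ipNr. Qed.
Lemma ip_sumr (I : Type) (r : seq I) (P : pred I) (F : I -> H) z :
  ip z (\sum_(i <- r | P i) F i) = \sum_(i <- r | P i) ip z (F i).
Proof. exact: (big_morph (ip z) (fun x y => ipDr x y z) (ip0r z)). Qed.
Lemma ip_real x : Num.conj (ip x x) = ip x x.
Proof. by rewrite -(ipc x x). Qed.

Section Lin.
Variable T : H -> H.
Hypothesis hT : lin_op T.
Lemma lin0 : T 0 = 0.
Proof.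
have := hT 1 0 0; rewrite scaler0 addr0 scale1r.
by move/(congr1 (fun w => w - T 0)); rewrite subrr addrK.
Qed.
Lemma linD x y : T (x + y) = T x + T y.
Proof. by have := hT 1 x y; rewrite !scale1r. Qed.
Lemma linZ a x : T (a *: x) = a *: T x.
Proof. by have := hT a x 0; rewrite !addr0 lin0 addr0. Qed.
Lemma linN x : T (- x) = - T x.
Proof. by rewrite -scaleN1r linZ scaleN1r. Qed.
Lemma linB x y : T (x - y) = T x - T y.
Proof. by rewrite linD linN. Qed.
Lemma lin_sum (I : Type) (r : seq I) (P : pred I) (F : I -> H) :
  T (\sum_(i <- r | P i) F i) = \sum_(i <- r | P i) T (F i).
Proof. exact: (big_morph T linD lin0). Qed.
End Lin.

Definition IP n (x y : 'I_n -> H) := \sum_(i < n) ip (x i) (y i).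

Lemma IP_ext n (x x' y y' : 'I_n -> H) : (forall i, x i = x' i) -> (forall i, y i = y' i) ->
  IP x y = IP x' y'.
Proof. by move=> hx hy; apply: eq_bigr => i _; rewrite hx hy. Qed.

Lemma IP_gen n (x y x' y' : 'I_n -> H) (c : C) :
  IP (fun i => x i + c *: y i) (fun i => x' i + c *: y' i) =
  IP x x' + Num.conj c * IP x y' + c * IP y x' + c * Num.conj c * IP y y'.
Proof.
rewrite /IP.
rewrite (eq_bigr (fun i => ip (x i) (x' i) + Num.conj c * ip (x i) (y' i) +
   c * ip (y i) (x' i) + c * Num.conj c * ip (y i) (y' i))); last first.
  by move=> i _; rewrite ipDl !ipDr !ipZl !ipZr; ring.
by rewrite !big_split /= -!mulr_sumr.
Qed.

Lemma IP_ge0 n (x : 'I_n -> H) : 0 <= IP x x.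
Proof. by apply: sumr_ge0 => i _. Qed.

Lemma IPc n (x y : 'I_n -> H) : IP y x = Num.conj (IP x y).
Proof. by rewrite /IP rmorph_sum; apply: eq_bigr => i _; rewrite ipc. Qed.

Lemma IP_real n (x : 'I_n -> H) : Num.conj (IP x x) = IP x x.
Proof. by rewrite -IPc. Qed.

Definition lin_mx n (Y : 'M[H -> H]_n) := forall i j, lin_op (Y i j).

Lemma mx_applyD n (Y : 'M[H -> H]_n) (x y : 'I_n -> H) (c : C) i :
  lin_mx Y -> mx_apply Y (fun k => x k + c *: y k) i = mx_apply Y x i + c *: mx_apply Y y i.
Proof.
move=> hY; rewrite /mx_apply scaler_sumr -big_split /=.
by apply: eq_bigr => j _; rewrite (linD (hY i j)) (linZ (hY i j)).
Qed.

End Hil.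

Section Proj.
Variables (R : realType) (H : lmodType R[i]) (ip : H -> H -> R[i]).
Local Notation C := (R[i]).
Hypothesis ipl : forall (a : C) x y z, ip (a *: x + y) z = a * ip x z + ip y z.
Hypothesis ipc : forall x y, ip y x = Num.conj (ip x y).
Hypothesis ipp : forall x, 0 <= ip x x.
Hypothesis ipd : forall x, ip x x = 0 -> x = 0.
Variable p : H -> H.
Hypothesis plin : lin_op p.
Hypothesis pp : forall u, p (p u) = p u.
Hypothesis padj : adjoint_of ip p p.

Local Notation ip0l := (ip0l ipl).
Local Notation ip0r := (ip0r ipl ipc).
Local Notation ipDl := (ipDl ipl).
Local Notation ipDr := (ipDr ipl ipc).
Local Notation ipZl := (ipZl ipl).
Local Notation ipZr := (ipZr ipl ipc).
Local Notation ipBl := (ipBl ipl).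
Local Notation ipBr := (ipBr ipl ipc).
Local Notation IP := (IP ip).
Local Notation ipNl := (ipNl ipl).
Local Notation ipNr := (ipNr ipl ipc).

Definition psi (x : H -> H) := fun u => p (x (p u)).

Lemma psi_apply n (Y : 'M[H -> H]_n) (xi : 'I_n -> H) i :
  (forall k, p (xi k) = xi k) ->
  ip (mx_apply (\matrix_(i, j) psi (Y i j)) xi i) (xi i) = ip (mx_apply Y xi i) (xi i).
Proof.
move=> hxi; rewrite /mx_apply.
rewrite (eq_bigr (fun j => p (Y i j (xi j)))); last by move=> j _; rewrite mxE /psi hxi.
by rewrite -(lin_sum plin) padj hxi.
Qed.

Lemma shift_apply n (Y : 'M[H -> H]_n) (xi : 'I_n -> H) (e t : R) i :
  mx_apply (mx_shift p e t Y) xi i =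
  mx_apply Y xi i + (e%:C *: p (xi i) + t%:C *: (xi i - p (xi i))).
Proof.
rewrite /mx_apply (eq_bigr (fun j => Y i j (xi j) +
   (if i == j then e%:C *: p (xi j) + t%:C *: (xi j - p (xi j)) else 0))); last first.
  by move=> j _; rewrite mxE; case: eqP.
rewrite big_split /=; congr (_ + _).
rewrite (bigD1 i) //= eqxx big1 ?addr0 // => j /negbTE.
by rewrite eq_sym => ->.
Qed.

Lemma easyE n (Y : 'M[H -> H]_n) :
  (forall e : R, 0 < e -> exists2 t : R, 0 < t & mx_pos ip (mx_shift p e t Y)) ->
  mx_pos_pH ip p (\matrix_(i, j) psi (Y i j)).
Proof.
move=> hY xi hxi.
rewrite (eq_bigr (fun i => ip (mx_apply Y xi i) (xi i))); last by move=> i _; rewrite psi_apply.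
apply: (@ge0_eps _ _ (IP xi xi)); first exact: IP_ge0.
move=> e /hY [t t0 /(_ xi)].
rewrite (eq_bigr (fun i => ip (mx_apply Y xi i) (xi i) + e%:C * ip (xi i) (xi i))).
  by rewrite big_split /= -mulr_sumr.
move=> i _; rewrite shift_apply hxi subrr scaler0 addr0 ipDl ipZl //.
Qed.

Definition nq (x : H) := complex.Re (ip x x).

Lemma ReD (a b : C) : complex.Re (a + b) = complex.Re a + complex.Re b.
Proof. by case: a; case: b. Qed.
Lemma Re0 : complex.Re (0 : C) = 0. Proof. by []. Qed.
Lemma Re_sum (I : Type) (r : seq I) (P : pred I) (F : I -> C) :
  complex.Re (\sum_(i <- r | P i) F i) = \sum_(i <- r | P i) complex.Re (F i).
Proof. exact: (big_morph _ ReD Re0). Qed.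
Lemma ReMC (M : R) (w : C) : complex.Re (M%:C * w) = M * complex.Re w.
Proof. by case: w => a b /=; rewrite mul0r subr0. Qed.

Lemma nq_ge0 x : 0 <= nq x.
Proof. by have := ipp x; rewrite geC => /andP[]. Qed.

Lemma nqD2 x y : nq (x + y) <= 2 * nq x + 2 * nq y.
Proof.
have hpar : ip (x + y) (x + y) + ip (x - y) (x - y) =
   ip x x + ip x x + ip y y + ip y y.
  rewrite !ipDl !ipNl !ipDr !ipNr; ring.
have := congr1 (@complex.Re R) hpar; rewrite !ReD -/(nq _) -/(nq _) -/(nq _) -/(nq _).
have := nq_ge0 (x - y); lra.
Qed.

Lemma nq_sum n (f : 'I_n -> H) : nq (\sum_(j < n) f j) <= 2%:R ^+ n * \sum_(j < n) nq (f j).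
Proof.
elim: n f => [|n IH] f.
  by rewrite !big_ord0 /nq ip0l mulr0.
rewrite !big_ord_recl.
set s := \sum_(i < n) f (lift ord0 i).
set S := \sum_(i < n) nq (f (lift ord0 i)).
have h1 := nqD2 (f ord0) s.
have h2 : nq s <= 2%:R ^+ n * S := IH _.
have h3 : 1 <= (2%:R : R) ^+ n by rewrite exprn_ege1 // ler1n.
have h4 : 0 <= S by apply: sumr_ge0 => i _; exact: nq_ge0.
have h5 := nq_ge0 (f ord0).
rewrite exprS; nra.
Qed.

Lemma nq_bound (T : H -> H) (M : R) x :
  ip (T x) (T x) <= M%:C * ip x x -> nq (T x) <= M * nq x.
Proof. by rewrite lecE => /andP[_]; rewrite ReMC. Qed.

Lemma nqv n (xi : 'I_n -> H) : complex.Re (IP xi xi) = \sum_i nq (xi i).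
Proof. by rewrite /IP Re_sum. Qed.

Lemma le_sum1 n (F : 'I_n -> R) i : (forall j, 0 <= F j) -> F i <= \sum_j F j.
Proof. by move=> h; rewrite (bigD1 i) //= lerDl sumr_ge0. Qed.

Lemma bound_vec n (Y : 'M[H -> H]_n) :
  (forall i j, exists M : R, forall x, ip (Y i j x) (Y i j x) <= M%:C * ip x x) ->
  exists2 K : R, 0 <= K & forall xi : 'I_n -> H,
    complex.Re (IP (fun i => mx_apply Y xi i) (fun i => mx_apply Y xi i)) <= K * complex.Re (IP xi xi).
Proof.
move=> hb.
have hM : forall i j, {M : R | forall x, ip (Y i j x) (Y i j x) <= M%:C * ip x x}.
  by move=> i j; apply: constructive_indefinite_description; exact: hb.
pose Ma i j := `|sval (hM i j)|.
have Ma0 : forall i j, 0 <= Ma i j by move=> i j; exact: normr_ge0.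
pose Mall := \sum_i \sum_j Ma i j.
have hMa : forall i j, Ma i j <= Mall.
  move=> i j; apply: (le_trans (le_sum1 j (Ma0 i))).
  by apply: (le_sum1 i (F := fun i => \sum_j Ma i j)) => k; apply: sumr_ge0.
have Mall0 : 0 <= Mall by apply: sumr_ge0 => i _; apply: sumr_ge0.
exists ((2%:R ^+ n * Mall) *+ n); first by rewrite mulrn_wge0 // mulr_ge0 // exprn_ge0.
move=> xi; rewrite !nqv.
have N0 : 0 <= \sum_j nq (xi j) by apply: sumr_ge0 => j _; exact: nq_ge0.
apply: (le_trans (ler_sum _ (fun i _ => nq_sum (fun j => Y i j (xi j))))).
have -> : (2%:R ^+ n * Mall) *+ n * \sum_j nq (xi j) =
    \sum_(i < n) (2%:R ^+ n * Mall * \sum_j nq (xi j)).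
  by rewrite sumr_const card_ord mulrnAl.
apply: ler_sum => i _.
rewrite -mulrA; apply: ler_wpM2l; first by rewrite exprn_ge0.
rewrite mulr_sumr; apply: ler_sum => j _.
apply: (le_trans (nq_bound (svalP (hM i j) (xi j)))).
apply: (le_trans (y := Ma i j * nq (xi j))).
  by apply: ler_wpM2r; [exact: nq_ge0 | exact: ler_norm].
by apply: ler_wpM2r; [exact: nq_ge0 | exact: hMa].
Qed.

End Proj.

Section Hard.
Variables (R : realType) (H : lmodType R[i]) (ip : H -> H -> R[i]).
Local Notation C := (R[i]).
Hypothesis ipl : forall (a : C) x y z, ip (a *: x + y) z = a * ip x z + ip y z.
Hypothesis ipc : forall x y, ip y x = Num.conj (ip x y).
Hypothesis ipp : forall x, 0 <= ip x x.
Hypothesis ipd : forall x, ip x x = 0 -> x = 0.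
Variable p : H -> H.
Hypothesis plin : lin_op p.
Hypothesis pp : forall u, p (p u) = p u.
Hypothesis padj : adjoint_of ip p p.

Local Notation ip0l := (ip0l ipl).
Local Notation ip0r := (ip0r ipl ipc).
Local Notation ipDl := (ipDl ipl).
Local Notation ipDr := (ipDr ipl ipc).
Local Notation ipZl := (ipZl ipl).
Local Notation ipZr := (ipZr ipl ipc).
Local Notation IP := (IP ip).
Local Notation psi := (psi p).

Lemma conjR (e : R) : Num.conj (e%:C) = e%:C.
Proof. by rewrite conjE conjc_real. Qed.

Lemma mx_apply_ext n (Y : 'M[H -> H]_n) (x y : 'I_n -> H) i :
  (forall k, x k = y k) -> mx_apply Y x i = mx_apply Y y i.
Proof. by move=> h; apply: eq_bigr => j _; rewrite h. Qed.

Lemma hardG n (Y : 'M[H -> H]_n) : lin_mx Y ->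
  (forall i j, exists M : R, forall x, ip (Y i j x) (Y i j x) <= M%:C * ip x x) ->
  mx_sa ip Y -> mx_pos_pH ip p (\matrix_(i, j) psi (Y i j)) ->
  forall e : R, 0 < e -> exists2 t : R, 0 < t & mx_pos ip (mx_shift p e t Y).
Proof.
move=> hl hb hsa hpos e e0.
have [K K0 hK] := bound_vec ipl ipc ipp hb.
exists (K / e + K / 2%:R + 1).
  have : 0 <= K / e by rewrite divr_ge0 // ltW.
  have : 0 <= K / 2%:R by rewrite divr_ge0.
  lra.
move=> xi.
pose x1 := fun i => p (xi i).
pose x2 := fun i => xi i - p (xi i).
pose Yv (v : 'I_n -> H) := fun i => mx_apply Y v i.
pose A := IP (Yv x1) x1.
pose B := IP (Yv x2) x1.
pose D := IP (Yv x2) x2.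
pose N1 := IP x1 x1.
pose N2 := IP x2 x2.
pose W := IP (Yv x2) (Yv x2).
have hxi : forall i, xi i = x1 i + 1 *: x2 i by move=> i; rewrite scale1r /x1 /x2 addrC subrK.
have hY : forall i, mx_apply Y xi i = Yv x1 i + 1 *: Yv x2 i.
  by move=> i; rewrite (mx_apply_ext Y i hxi) mx_applyD.
have o12 : forall i, ip (x1 i) (x2 i) = 0.
  by move=> i; rewrite /x1 /x2 padj (linB plin) pp subrr ip0r.
have o21 : forall i, ip (x2 i) (x1 i) = 0.
  by move=> i; rewrite /x1 /x2 -padj (linB plin) pp subrr ip0l.
have hs : forall i, mx_apply (mx_shift p e (K / e + K / 2%:R + 1) Y) xi i =
   Yv x1 i + 1 *: Yv x2 i + (e%:C *: x1 i + (K / e + K / 2%:R + 1)%:C *: x2 i).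
  by move=> i; rewrite shift_apply hY.
have hx1 : forall k, p (x1 k) = x1 k by move=> k; rewrite /x1 pp.
clearbody x1 x2.
have -> : \sum_(i < n) ip (mx_apply (mx_shift p e (K / e + K / 2%:R + 1) Y) xi i) (xi i) =
    IP (fun i => Yv x1 i + 1 *: Yv x2 i) (fun i => x1 i + 1 *: x2 i)
    + e%:C * N1 + (K / e + K / 2%:R + 1)%:C * N2.
  rewrite /N1 /N2 /IP !mulr_sumr -!big_split /=.
  apply: eq_bigr => i _.
  rewrite hs (hxi i) !ipDl !ipZl !ipDr !ipZr.
  rewrite !o12 !o21 !rmorph1; ring.
have eqle : forall a b : C, a = b -> a <= b by move=> a b ->.
rewrite IP_gen // rmorph1 !mul1r.
have sa12 : IP (Yv x1) x2 = Num.conj B by rewrite /B -(IPc ipc); exact: hsa.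
have saD : Num.conj D = D by rewrite /D -(IPc ipc); symmetry; exact: hsa.
have hA : 0 <= A.
  have := hpos x1 hx1.
  rewrite (eq_bigr (fun i => ip (mx_apply Y x1 i) (x1 i))) //.
  by move=> i _; apply: psi_apply.
have f1 : 0 <= e%:C * e%:C * N1 + e%:C * Num.conj B + e%:C * B + W.
  have h := IP_ge0 ipp (fun i => Yv x2 i + e%:C *: x1 i).
  rewrite IP_gen // conjR (IPc ipc (Yv x2) x1) in h.
  by apply: (le_trans h); apply: eqle; rewrite /B /W /N1; ring.
have f2 : 0 <= N2 + Num.conj D + D + W.
  have h := IP_ge0 ipp (fun i => x2 i + 1 *: Yv x2 i).
  rewrite IP_gen // rmorph1 (IPc ipc (Yv x2) x2) in h.
  by apply: (le_trans h); apply: eqle; rewrite /D /W /N2; ring.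
have f3 : complex.Re W <= K * complex.Re N2 := hK x2.
have := final_ineq e0 K0 hA (IP_ge0 ipp x1) (IP_ge0 ipp x2) (IP_ge0 ipp _) saD f1 f2 f3.
by move=> h; apply: (le_trans h); apply: eqle; rewrite sa12.
Qed.
End Hard.

Lemma polar_pure (R : realType) (a b : R[i]) :
  a + b = 0 -> Num.conj 'i%R * a + 'i%R * b = 0 -> a = 0.
Proof.
rewrite -complexiE conjE; case: a => a1 a2; case: b => b1 b2.
move=> [h1 h2] [h3 h4].
apply/eqP; rewrite eq_complex /=; apply/andP; split; apply/eqP; lra.
Qed.

Section Main.
Variables (R : realType) (H : lmodType R[i]) (ip : H -> H -> R[i]).
Local Notation C := (R[i]).
Hypothesis ipl : forall (a : C) x y z, ip (a *: x + y) z = a * ip x z + ip y z.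
Hypothesis ipc : forall x y, ip y x = Num.conj (ip x y).
Hypothesis ipp : forall x, 0 <= ip x x.
Hypothesis ipd : forall x, ip x x = 0 -> x = 0.
Variable p : H -> H.
Hypothesis plin : lin_op p.
Hypothesis pp : forall u, p (p u) = p u.
Hypothesis padj : adjoint_of ip p p.
Variable V : (H -> H) -> Prop.
Hypothesis hV : operator_system ip V.

Local Notation ip0l := (ip0l ipl).
Local Notation ip0r := (ip0r ipl ipc).
Local Notation ipDl := (ipDl ipl).
Local Notation ipDr := (ipDr ipl ipc).
Local Notation ipZl := (ipZl ipl).
Local Notation ipZr := (ipZr ipl ipc).
Local Notation ipNl := (ipNl ipl).
Local Notation ipNr := (ipNr ipl ipc).
Local Notation IP := (IP ip).
Local Notation psi := (psi p).

Lemma V_comb (a : C) x y : V x -> V y -> V (fun u => a *: x u + y u).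
Proof. by case: hV => _ _ _ h _; apply: h. Qed.
Lemma V_ext x y : V x -> (forall u, x u = y u) -> V y.
Proof. by move=> hx h; have -> : y = x by apply: functional_extensionality => u; rewrite h. Qed.
Lemma V_scale (a : C) x : V x -> V (fun u => a *: x u).
Proof.
move=> hx; case: hV => _ _ h0 _ _.
by apply: (V_ext (V_comb a hx h0)) => u; rewrite addr0.
Qed.
Lemma V_bnd x : V x -> bounded_op ip x.
Proof. by case: hV => h _ _ _ _; apply: h. Qed.
Lemma V_lin x : V x -> lin_op x.
Proof. by move/V_bnd => []. Qed.
Lemma V_adj x : V x -> exists2 y, V y & adjoint_of ip x y.
Proof. by case: hV => _ _ _ _ h; apply: h. Qed.

Lemma polar0 (s : H -> H) : lin_op s -> (forall v, ip (s (p v)) (p v) = 0) ->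
  forall u, p (s (p u)) = 0.
Proof.
move=> hs h0.
have hf : forall u w, ip (s (p u)) (p w) = 0.
  move=> u w.
  have h1 := h0 (u + w).
  rewrite (linD plin) (linD hs) !ipDl !ipDr !h0 add0r addr0 in h1.
  have h2 := h0 (u + 'i%R *: w).
  rewrite (linD plin) (linZ plin) (linD hs) (linZ hs) !ipDl !ipDr !ipZl !ipZr !h0 in h2.
  rewrite !mulr0 add0r addr0 in h2.
  apply: (polar_pure (b := ip (s (p w)) (p u))).
    by rewrite -h1; ring.
  by rewrite -h2; ring.
move=> u; apply: ipd; rewrite padj pp; exact: hf.
Qed.

Lemma Cp_pos s : Cp ip V p s -> forall v, 0 <= ip (s (p v)) (p v).
Proof.
case=> hin _ hpos v.
have := easyE ipl ipp plin padj hpos (xi := fun _ => p v) (fun _ => pp v).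
rewrite big_ord1 (psi_apply plin padj) //.
by rewrite /mx_apply big_ord1 mxE.
Qed.

Lemma K1 x : Jp ip V p x -> forall u, p (x (p u)) = 0.
Proof.
case=> k [c [s [hs hx]]] u.
rewrite hx (lin_sum plin) big1 // => l _.
rewrite (linZ plin).
have [h1 h2] := hs l.
have hl : lin_op (s l).
  by case: h1 => /(_ ord0 ord0); rewrite mxE => /V_lin.
have -> : p (s l (p u)) = 0; last by rewrite scaler0.
apply: (polar0 hl) => v.
apply/eqP; rewrite eq_le Cp_pos // andbT.
by have := Cp_pos h2 v; rewrite ipNl oppr_ge0.
Qed.


Lemma Cp_of s : V s -> (forall a b, ip (s a) b = ip a (s b)) -> (forall u, p (s (p u)) = 0) ->
  Cp ip V p s.
Proof.
move=> hs hsa h0.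
have hmsa : mx_sa ip (\matrix_(i < 1, j < 1) s).
  by move=> xi eta; rewrite !big_ord1 /mx_apply !big_ord1 !mxE.
split => //.
- by move=> i j; rewrite mxE.
- apply: (hardG ipl ipc ipp plin pp padj) => //.
  + by move=> i j; rewrite mxE; exact: V_lin.
  + by move=> i j; rewrite mxE; case: (V_bnd hs).
  + by move=> xi hxi; rewrite big_ord1 /mx_apply big_ord1 !mxE /psi h0 ip0l.
Qed.

Lemma Cp_pm s : V s -> (forall a b, ip (s a) b = ip a (s b)) -> (forall u, p (s (p u)) = 0) ->
  Cp ip V p s /\ Cp ip V p (fun u => - s u).
Proof.
move=> hs hsa h0; split; first exact: Cp_of.
apply: Cp_of.
- by apply: (V_ext (V_scale (-1) hs)) => u; rewrite scaleN1r.
- by move=> a b; rewrite ipNl ipNr hsa.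
- by move=> u; rewrite (linN plin) h0 oppr0.
Qed.

Lemma K2 x : V x -> (forall u, p (x (p u)) = 0) -> Jp ip V p x.
Proof.
move=> hx h0.
have [y hyV hy] := V_adj hx.
have hy' : forall u v, ip (y u) v = ip u (x v).
  by move=> u v; rewrite (ipc v (y u)) -hy (ipc (x v) u).
have py : forall u, p (y (p u)) = 0.
  move=> u; apply: ipd; rewrite padj pp hy' padj h0 ip0r //.
have lx := V_lin hx.
have ly := V_lin hyV.
pose s0 := fun u => x u + y u.
pose s1 := fun u => 'i%R *: (x u - y u).
have [c0 c0'] : Cp ip V p s0 /\ Cp ip V p (fun u => - s0 u).
  apply: Cp_pm.
  - by apply: (V_ext (V_comb 1 hx hyV)) => u; rewrite scale1r.
  - by move=> a b; rewrite /s0 ipDl ipDr hy hy' addrC.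
  - by move=> u; rewrite /s0 (linD plin) h0 py addr0.
have [c1 c1'] : Cp ip V p s1 /\ Cp ip V p (fun u => - s1 u).
  apply: Cp_pm.
  - apply: (V_ext (V_scale 'i%R (V_comb (-1) hyV hx))) => u.
    by rewrite /s1 scaleN1r addrC.
  - move=> a b; rewrite /s1 ipZl ipZr ipDl ipDr ipNl ipNr hy hy' conjCi; ring.
  - by move=> u; rewrite /s1 (linZ plin) (linB plin) h0 py subrr scaler0.
exists 2, (fun l : 'I_2 => if val l == 0%N then 2%:R^-1 else - 'i%R / 2%:R),
  (fun l : 'I_2 => if val l == 0%N then s0 else s1); split.
  by case=> [[|[|//]]] /=.
move=> u; rewrite big_ord_recl big_ord1 /=; rewrite /s0 /s1 /=; rewrite (scalerA (- 'i%R / 2%:R)).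
have -> : (- 'i%R / 2%:R) * 'i%R = 2%:R^-1 :> C.
  by rewrite mulrAC mulNr -expr2 sqrCi opprK mul1r.
rewrite -scalerDr addrACA subrr addr0.
have -> : x u + x u = (2%:R : C) *: x u by rewrite scalerDl scale1r.
by rewrite scalerA mulVf ?scale1r // pnatr_eq0.
Qed.

End Main.

Section Herm.
Variables (R : realType) (H : lmodType R[i]) (ip : H -> H -> R[i]).
Local Notation C := (R[i]).
Hypothesis ipl : forall (a : C) x y z, ip (a *: x + y) z = a * ip x z + ip y z.
Hypothesis ipc : forall x y, ip y x = Num.conj (ip x y).
Hypothesis ipp : forall x, 0 <= ip x x.
Hypothesis ipd : forall x, ip x x = 0 -> x = 0.
Variable p : H -> H.
Hypothesis plin : lin_op p.
Hypothesis pp : forall u, p (p u) = p u.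
Hypothesis padj : adjoint_of ip p p.

Local Notation ip0l := (ip0l ipl).
Local Notation ip0r := (ip0r ipl ipc).
Local Notation ipDl := (ipDl ipl).
Local Notation ipDr := (ipDr ipl ipc).
Local Notation ipBr := (ipBr ipl ipc).
Local Notation IP := (IP ip).
Local Notation psi := (psi p).

Lemma collapse_r n (f : 'I_n -> H) i w :
  \sum_(k < n) ip (f k) (if k == i then w else 0) = ip (f i) w.
Proof.
rewrite (bigD1 i) //= eqxx big1 ?addr0 // => k /negbTE ->; exact: ip0r.
Qed.

Lemma collapse_l n (g : 'I_n -> H -> H) j w : (forall k, g k 0 = 0) ->
  \sum_(k < n) g k (if k == j then w else 0) = g j w.
Proof.
move=> h0; rewrite (bigD1 j) //= eqxx big1 ?addr0 // => k /negbTE ->; exact: h0.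
Qed.

Lemma psi_lin x : lin_op x -> lin_op (psi x).
Proof. by move=> hx a u v; rewrite /psi plin hx plin. Qed.

Lemma herm n (X : 'M[H -> H]_n) (Xs : 'I_n -> 'I_n -> H -> H) :
  lin_mx X -> (forall i j, adjoint_of ip (X j i) (Xs i j)) ->
  mx_pos_pH ip p (\matrix_(i, j) psi (X i j)) ->
  forall i j u, p (Xs i j (p u)) = p (X i j (p u)).
Proof.
move=> hl hadj hpos i j u.
set Z := \matrix_(i, j) psi (X i j).
have hZ : lin_mx Z by move=> a b; rewrite mxE; apply: psi_lin.
pose F xi eta := IP (fun k => mx_apply Z xi k) eta.
have key : forall v, ip (p v) (Xs i j (p u)) = ip (p v) (p (X i j (p u))).
  move=> v.
  pose xi := fun k : 'I_n => if k == j then p u else 0.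
  pose eta := fun k : 'I_n => if k == i then p v else 0.
  have fix_xi : forall k, p (xi k) = xi k.
    by move=> k; rewrite /xi; case: (k == j); rewrite ?pp ?(lin0 plin).
  have fix_eta : forall k, p (eta k) = eta k.
    by move=> k; rewrite /eta; case: (k == i); rewrite ?pp ?(lin0 plin).
  have hF : forall c : C, 0 <= IP (fun k => mx_apply Z xi k + c *: mx_apply Z eta k)
                                (fun k => xi k + c *: eta k).
    move=> c; have := hpos (fun k => xi k + c *: eta k).
    have -> : IP (fun k => mx_apply Z xi k + c *: mx_apply Z eta k) (fun k => xi k + c *: eta k)
      = \sum_(k < n) ip (mx_apply Z (fun k => xi k + c *: eta k) k) (xi k + c *: eta k).
      by apply: eq_bigr => k _; rewrite mx_applyD.
    apply; move=> k; rewrite (linD plin) (linZ plin) fix_xi fix_eta //.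
  have h1 := hF 1; have h2 := hF 'i%R.
  rewrite IP_gen // in h1; rewrite IP_gen // in h2.
  rewrite rmorph1 !mul1r in h1.
  have := herm_pure (hpos xi fix_xi) (hpos eta fix_eta) h1 h2.
  rewrite /IP /xi /eta !collapse_r /mx_apply.
  rewrite (collapse_l (g := fun k => Z i k)); last by move=> k; exact: lin0.
  rewrite (collapse_l (g := fun k => Z j k)); last by move=> k; exact: lin0.
  rewrite !mxE /psi !pp -(ipc (p (X i j (p u))) (p v)).
  by rewrite padj pp -hadj.
apply/eqP; rewrite -subr_eq0; apply/eqP; apply: ipd.
have -> : p (Xs i j (p u)) - p (X i j (p u)) = p (Xs i j (p u) - p (X i j (p u))).
  by rewrite (linB plin) pp.
by rewrite -padj ipBr key subrr.
Qed.

End Herm.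

Theorem corollary4p10 (R : realType) (H : lmodType R[i]) (ip : H -> H -> R[i])
    (V : (H -> H) -> Prop) (p : H -> H) :
  is_hilbert ip -> operator_system ip V -> V p -> projection ip p ->
  exists psi : (H -> H) -> (H -> H), compression_coi ip V p psi.
Proof.
move=> [[ipl ipc ipp ipd] _] hV Vp [[plin _] pp padj].
have K1' := K1 ipl ipc ipp ipd plin pp padj hV.
have K2' := K2 ipl ipc ipp ipd plin pp padj hV.
exists (psi p); split.
  split.
  - by move=> a x y _ _ u; rewrite /psi /= plin.
  - by move=> x Vx; exists x.
  - by move=> y [x Vx hx]; exists x => // u; rewrite hx.
  - move=> x Vx; split; first exact: K2'.
    by move=> hJ u; apply: K1'.
  - by move=> u; rewrite /psi !pp.
move=> n X hX; split.
  case=> Y [hYin hYsa hYpos] hJ.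
  have hYX : forall i j u, psi p (Y i j) u = psi p (X i j) u.
    move=> i j u; have := K1' _ (hJ i j) u.
    by rewrite /psi (linB plin) => /eqP; rewrite subr_eq0 => /eqP.
  have := easyE ipl ipp plin padj hYpos.
  move=> hP xi hxi; have := hP xi hxi.
  congr (_ <= _); apply: eq_bigr => i _; congr (ip _ _).
  by apply: eq_bigr => j _; rewrite !mxE hYX.
move=> hpos.
have hXs : forall i j, {y | V y /\ adjoint_of ip (X j i) y}.
  move=> i j; apply: constructive_indefinite_description.
  by have [y hy1 hy2] := V_adj hV (hX j i); exists y.
pose Xs i j := sval (hXs i j).
have XsV : forall i j, V (Xs i j) by move=> i j; case: (svalP (hXs i j)).
have Xsadj : forall i j, adjoint_of ip (X j i) (Xs i j) by move=> i j; case: (svalP (hXs i j)).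
have hlX : lin_mx X.
  by move=> i j; have := V_lin hV (hX i j).
have hh := herm ipl ipc ipd plin pp padj hlX Xsadj hpos.
pose Y := \matrix_(i, j) (fun u => 2%:R^-1 *: X i j u + 2%:R^-1 *: Xs i j u).
have YV : forall i j, V (Y i j).
  move=> i j; rewrite mxE.
  exact: (V_comb hV _ (hX i j) (V_scale hV _ (XsV i j))).
have hYX : forall i j u, psi p (Y i j) u = psi p (X i j) u.
  move=> i j u; rewrite /psi mxE plin (linZ plin) hh -scalerDl.
  have -> : (2%:R^-1 + 2%:R^-1 : R[i]) = 1.
    by field.
  by rewrite scale1r.
have hsa : mx_sa ip Y.
  move=> xi eta.
  rewrite /mx_apply.
  under eq_bigr do rewrite (ip_suml ipl).
  under [RHS]eq_bigr do rewrite (ip_sumr ipl ipc).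
  rewrite [RHS]exchange_big /=.
  apply: eq_bigr => i _; apply: eq_bigr => j _.
  rewrite !mxE (ipDl ipl) (ipDr ipl ipc) !(ipZl ipl) !(ipZr ipl ipc) conj_half.
  rewrite -Xsadj (ipc (eta i) (Xs i j (xi j))) -Xsadj -(ipc (X j i (eta i)) (xi j)).
  by rewrite addrC.
clearbody Y.
exists Y.
  split => //.
  apply: (hardG ipl ipc ipp plin pp padj) => //.
  + by move=> i j; have := V_lin hV (YV i j).
  + by move=> i j; case: (V_bnd hV (YV i j)).
  + move=> xi hxi; have := hpos xi hxi.
    congr (_ <= _); apply: eq_bigr => i _; congr (ip _ _).
    by apply: eq_bigr => j _; rewrite !mxE hYX.
move=> i j; apply: K2'.
  apply: (V_ext (V_comb hV (-1) (hX i j) (YV i j))) => u.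
  by rewrite scaleN1r addrC.
move=> u; rewrite (linB plin).
by have := hYX i j u; rewrite /psi => ->; rewrite subrr.
Qed.
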